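(* Let $c\ge0$, $d>0$, $\beta>0$, and let $\Delta_{q_\beta}$ denote the discriminant (in $\mu$) of $q_\beta(\mu):=\mu^4+2d\mu^3+(2c+d^2)\mu^2+d(\beta/2+2c)\mu+c(\beta+c)$, regarded as a function of $d$. Then: (i) For $\beta<4c$, $\Delta_{q_\beta}=0$ has a unique non-negative solution $d_1\in(0,2\sqrt{c})$; set $d_2=d_3=\infty$. (ii) For $4c\le\beta<8c$, $\Delta_{q_\beta}=0$ has the three non-negative solutions $d_1\in(0,2\sqrt{c})$, $d_2\in(2\sqrt{c},2\sqrt{\beta}]$ and $d_3\in[2\sqrt{\beta},\infty)$. (iii) For $\beta\ge8c>0$, $\Delta_{q_\beta}=0$ has two non-negative solutions $d_1\in(0,2\sqrt{c})$, $d_2\in(2\sqrt{c},2\sqrt{\beta}]$; set $d_3=\infty$. (iv) For $c=0$, $\Delta_{q_\beta}=0$ has two non-negative solutions $d_1=0$ and $d_2=\sqrt{27\beta/8}$; set $d_3=\infty$. (v) The polynomial $q_\beta$ has no real roots if $d<d_1$ and four real roots if $d_2\le d\le d_3$; in all other cases $q_\beta$ has two real roots. *)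

(* Defs.v *)
From HB Require Import structures.
From mathcomp Require Import all_boot all_order all_algebra.
From mathcomp Require Import polyrcf.
From mathcomp Require Import reals.
Set Implicit Arguments. Unset Strict Implicit. Unset Printing Implicit Defensive.
Import Order.TTheory GRing.Theory Num.Theory.
Local Open Scope ring_scope.

Definition disc (R : fieldType) (p : {poly R}) : R :=
  let n := (size p).-1 in
  (-1) ^+ (n * n.-1)./2 * (lead_coef p)^-1 * resultant p p^`().

Definition qbeta (R : fieldType) (c d beta : R) : {poly R} :=
  'X^4 + (2 * d) *: 'X^3 + (2 * c + d ^+ 2) *: 'X^2
  + (d * (beta / 2 + 2 * c)) *: 'X + (c * (beta + c))%:P.

Definition Delta_q (R : fieldType) (c beta d : R) : R := disc (qbeta c d beta).

Definition nreal_roots (R : rcfType) (p : {poly R}) : nat :=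
  (\sum_(x <- rootsR p) mup x p)%N.

(* Main.v *)
From HB Require Import structures.
From mathcomp Require Import all_boot all_order all_algebra.
From mathcomp Require Import polyrcf.
From mathcomp Require Import reals.
From mathcomp Require Import ring lra.
Require Import Defs.
Import Order.TTheory GRing.Theory Num.Theory.
Local Open Scope ring_scope.
Lemma sum_count_uniq (R : eqType) (u s : seq R) : uniq u -> {subset s <= u} ->
  (\sum_(x <- u) count_mem x s)%N = size s.
Proof.
move=> uu; elim: s => [|a s IH] sub /=; first by rewrite big1.
rewrite big_split /= IH; last by move=> x xs; apply: sub; rewrite inE xs orbT.
rewrite -big_mkcond /= sum1_count.
have -> : count (eq_op a) u = count_mem a u by apply: eq_count => x; rewrite /= eq_sym.
by rewrite count_uniq_mem // sub ?inE ?eqxx.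
Qed.

Lemma nreal_prod (R : rcfType) (s : seq R) (r : {poly R}) : r != 0 ->
  (forall x, ~~ root r x) ->
  nreal_roots ((\prod_(a <- s) ('X - a%:P)) * r) = size s.
Proof.
move=> r0 nr; rewrite /nreal_roots.
set p := _ * r.
have pr0 : \prod_(a <- s) ('X - a%:P) != 0.
  by rewrite monic_neq0 // monic_prod_XsubC.
have p0 : p != 0 by rewrite mulf_neq0.
have ron := roots_on_rootsR p0.
rewrite (eq_big_seq (fun x => count_mem x s)).
  apply: sum_count_uniq; first exact: uniq_roots.
  move=> x xs; rewrite -ron /= rootM; apply/orP; left.
  by rewrite root_prod_XsubC.
by move=> x _; rewrite mupM // mu_prod_XsubC mupNroot // addn0.
Qed.
Definition quad {R : nzRingType} (a b : R) : {poly R} := 'X^2 + a *: 'X + b%:P.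

Lemma quadE (R : comNzRingType) (a b r1 r2 : R) : a = -(r1 + r2) -> b = r1 * r2 ->
  quad a b = ('X - r1%:P) * ('X - r2%:P).
Proof.
move=> -> ->; rewrite /quad -mul_polyC polyCN polyCD polyCM; ring.
Qed.

Lemma qbeta_quad {R : fieldType} {c d beta a1 b1 a2 b2 : R} :
  2 * d = a1 + a2 -> 2 * c + d ^+ 2 = b1 + b2 + a1 * a2 ->
  d * (beta / 2 + 2 * c) = a1 * b2 + a2 * b1 -> c * (beta + c) = b1 * b2 ->
  qbeta c d beta = quad a1 b1 * quad a2 b2.
Proof.
move=> e3 e2 e1 e0; rewrite /qbeta /quad -!mul_polyC e3 e2 e1 e0.
rewrite !(polyCD, polyCM); ring.
Qed.

Lemma hornerq (R : fieldType) (c d beta x : R) :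
  (qbeta c d beta).[x] = x ^+ 4 + 2 * d * x ^+ 3 + (2 * c + d ^+ 2) * x ^+ 2
     + d * (beta / 2 + 2 * c) * x + c * (beta + c).
Proof. by rewrite /qbeta !hornerE. Qed.

Lemma hornerquad (R : comNzRingType) (a b x : R) : (quad a b).[x] = x ^+ 2 + a * x + b.
Proof. by rewrite /quad !hornerE. Qed.

Lemma quad_noroot {R : realFieldType} {a b : R} : a ^+ 2 - 4 * b < 0 ->
  forall x, 0 < (quad a b).[x].
Proof.
move=> h x; rewrite hornerquad.
have : 0 <= (2 * x + a) ^+ 2 by apply: sqr_ge0.
nra.
Qed.

Lemma quad_split {R : rcfType} {a b : R} : 0 <= a ^+ 2 - 4 * b ->
  exists r1 r2, quad a b = ('X - r1%:P) * ('X - r2%:P).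
Proof.
move=> h; set S := Num.sqrt (a ^+ 2 - 4 * b).
have hS : S ^+ 2 = a ^+ 2 - 4 * b by rewrite sqr_sqrtr.
clearbody S.
exists ((- a + S) / 2), ((- a - S) / 2); apply: quadE.
  by field.
have -> : b = (a ^+ 2 - S ^+ 2) / 4 by rewrite hS; field.
by field.
Qed.

Lemma quad_neq0 (R : nzRingType) (a b : R) : quad a b != 0.
Proof.
apply/eqP => h; have := congr1 (fun p : {poly R} => p`_2) h.
rewrite /quad !coefE /= mulr0 !addr0; apply/eqP; exact: oner_neq0.
Qed.

Definition nq {R : numDomainType} (a b : R) : nat := if 0 <= a ^+ 2 - 4 * b then 2%N else 0%N.

Lemma nreal_quad2 (R : rcfType) (a1 b1 a2 b2 : R) :
  nreal_roots (quad a1 b1 * quad a2 b2) = (nq a1 b1 + nq a2 b2)%N.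
Proof.
rewrite /nq; case: ifP => h1; case: ifP => h2.
- have [r1 [r2 ->]] := quad_split h1; have [s1 [s2 ->]] := quad_split h2.
  have -> : ('X - r1%:P) * ('X - r2%:P) * (('X - s1%:P) * ('X - s2%:P)) =
    (\prod_(a <- [:: r1; r2; s1; s2]) ('X - a%:P)) * 1.
    by rewrite !big_cons big_nil !mulr1 !mulrA.
  by rewrite nreal_prod ?oner_neq0 // => x; rewrite root1.
- have [r1 [r2 ->]] := quad_split h1.
  have -> : ('X - r1%:P) * ('X - r2%:P) * quad a2 b2 =
    (\prod_(a <- [:: r1; r2]) ('X - a%:P)) * quad a2 b2.
    by rewrite !big_cons big_nil !mulr1.
  rewrite nreal_prod ?quad_neq0 // => x; rewrite rootE gt_eqF //.
  by apply: quad_noroot; rewrite ltNge h2.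
- have [r1 [r2 ->]] := quad_split h2.
  have -> : quad a1 b1 * (('X - r1%:P) * ('X - r2%:P)) =
    (\prod_(a <- [:: r1; r2]) ('X - a%:P)) * quad a1 b1.
    by rewrite !big_cons big_nil !mulr1 mulrC.
  rewrite nreal_prod ?quad_neq0 // => x; rewrite rootE gt_eqF //.
  by apply: quad_noroot; rewrite ltNge h1.
- have -> : quad a1 b1 * quad a2 b2 = (\prod_(a <- [::]) ('X - a%:P)) * (quad a1 b1 * quad a2 b2).
    by rewrite big_nil mul1r.
  rewrite nreal_prod ?mulf_neq0 ?quad_neq0 // => x.
  rewrite rootE hornerM gt_eqF // mulr_gt0 // quad_noroot // ltNge ?h1 ?h2 //.
Qed.
Definition cub {R : nzRingType} (A B C D : R) : {poly R} :=
  A *: 'X^3 + B *: 'X^2 + C *: 'X + D%:P.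

Lemma horner_cub (R : comNzRingType) (A B C D x : R) :
  (cub A B C D).[x] = A * x ^+ 3 + B * x ^+ 2 + C * x + D.
Proof. by rewrite /cub !hornerE. Qed.

Lemma ivt3 {R : rcfType} (A B C D a b : R) : a <= b ->
  (A * a ^+ 3 + B * a ^+ 2 + C * a + D) * (A * b ^+ 3 + B * b ^+ 2 + C * b + D) <= 0 ->
  exists x, a <= x <= b /\ A * x ^+ 3 + B * x ^+ 2 + C * x + D = 0.
Proof.
move=> ab h.
have h' : (cub A B C D).[a] * (cub A B C D).[b] <= 0 by rewrite !horner_cub.
have [x hx /rootP] := polyrcf.poly_ivt ab h'.
by rewrite horner_cub => e; exists x; split => //; move: hx; rewrite in_itv.
Qed.

Lemma ivt3oo {R : rcfType} (A B C D a b : R) : a <= b ->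
  (A * a ^+ 3 + B * a ^+ 2 + C * a + D) * (A * b ^+ 3 + B * b ^+ 2 + C * b + D) < 0 ->
  exists x, a < x < b /\ A * x ^+ 3 + B * x ^+ 2 + C * x + D = 0.
Proof.
move=> ab h.
have h' : (cub A B C D).[a] * (cub A B C D).[b] < 0 by rewrite !horner_cub.
have [x hx /rootP] := polyrcf.poly_ivtoo ab h'.
by rewrite horner_cub => e; exists x; split => //; move: hx; rewrite in_itv.
Qed.

Lemma qbeta_factor {R : rcfType} (c d beta : R) : 0 < d -> 0 < beta ->
  exists a1 b1 a2 b2 : R,
   [/\ 2 * d = a1 + a2, 2 * c + d ^+ 2 = b1 + b2 + a1 * a2,
       d * (beta / 2 + 2 * c) = a1 * b2 + a2 * b1 & c * (beta + c) = b1 * b2].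
Proof.
move=> d0 b0.
pose s := c - d ^+ 2 / 4.
pose M := 1 + 2 * `|s| + beta * `|s| + beta * d.
have hs0 : 0 <= `|s| by [].
have bd : 0 <= beta * d by nra.
have bs : 0 <= beta * `|s| by nra.
have hM1 : 1 <= M by rewrite /M; nra.
have hMd : beta * d <= M by rewrite /M; nra.
have hsl : - `|s| <= s by have := ler_norm (- s); rewrite normrN => h; lra.
have hsr : s <= `|s| by apply: ler_norm.
have hprod : (8 * 0 ^+ 3 + 16 * s * 0 ^+ 2 + - (8 * beta * s) * 0 + - (beta ^+ 2 * d ^+ 2 / 4)) *
   (8 * M ^+ 3 + 16 * s * M ^+ 2 + - (8 * beta * s) * M + - (beta ^+ 2 * d ^+ 2 / 4)) <= 0.
  have hQ : M <= M * (M - 2 * `|s|) - beta * `|s|.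
    have : M - 2 * `|s| - 1 >= beta * `|s| by rewrite /M; lra.
    nra.
  have h2 : M ^+ 2 + 2 * s * M - beta * s >= M.
    have : 2 * s * M >= - (2 * `|s| * M) by nra.
    have : - (beta * s) >= - (beta * `|s|) by nra.
    nra.
  have h3 : 8 * M ^+ 3 + 16 * s * M ^+ 2 - 8 * beta * s * M >= beta ^+ 2 * d ^+ 2 / 4.
    have : 8 * M * (M ^+ 2 + 2 * s * M - beta * s) >= 8 * M ^+ 2 by nra.
    have : M ^+ 2 >= (beta * d) ^+ 2 by nra.
    have : 0 <= beta ^+ 2 * d ^+ 2 by nra.
    nra.
  have h4 : 0 <= 8 * M ^+ 3 + 16 * s * M ^+ 2 + - (8 * beta * s) * M + - (beta ^+ 2 * d ^+ 2 / 4).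
    lra.
  have h5 : 8 * 0 ^+ 3 + 16 * s * 0 ^+ 2 + - (8 * beta * s) * 0 + - (beta ^+ 2 * d ^+ 2 / 4) <= 0.
    have : 0 <= beta ^+ 2 * d ^+ 2 by nra.
    lra.
  nra.
have [w [/andP [w0 wM] ew]] := @ivt3 R 8 (16 * s) (- (8 * beta * s)) (- (beta ^+ 2 * d ^+ 2 / 4)) 0 M (le_trans ler01 hM1) hprod.
have wpos : 0 < w.
  rewrite lt_neqAle w0 andbT; apply/eqP => ew0; move: ew; rewrite -ew0.
  have : 0 < beta ^+ 2 * d ^+ 2 by rewrite mulr_gt0 // exprn_gt0.
  rewrite !expr0n /= !mulr0; lra.
pose k := Num.sqrt (2 * w).
have hk : k ^+ 2 = 2 * w by rewrite sqr_sqrtr //; lra.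
clearbody k.
pose m := beta * d / (8 * w).
pose T := c + w.
have wn0 : w != 0 by rewrite gt_eqF.
exists (d - k), (T - k * (d / 2 - m)), (d + k), (T + k * (d / 2 - m)); split.
- ring.
- have -> : T - k * (d / 2 - m) + (T + k * (d / 2 - m)) + (d - k) * (d + k) = 2 * T + d ^+ 2 - k ^+ 2 by ring.
  by rewrite hk /T; ring.
- have -> : (d - k) * (T + k * (d / 2 - m)) + (d + k) * (T - k * (d / 2 - m)) = 2 * d * T - 2 * k ^+ 2 * (d / 2 - m) by ring.
  rewrite hk /T /m; field; exact: wn0.
- have -> : (T - k * (d / 2 - m)) * (T + k * (d / 2 - m)) = T ^+ 2 - k ^+ 2 * (d / 2 - m) ^+ 2 by ring.
  rewrite hk /T /m.
  have E : 32 * w * ((c + w) ^+ 2 - 2 * w * (d / 2 - beta * d / (8 * w)) ^+ 2 - c * (beta + c)) =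
     4 * (8 * w ^+ 3 + 16 * s * w ^+ 2 + - (8 * beta * s) * w + - (beta ^+ 2 * d ^+ 2 / 4)).
    rewrite /s; field; exact: wn0.
  rewrite ew mulr0 in E.
  have : (c + w) ^+ 2 - 2 * w * (d / 2 - beta * d / (8 * w)) ^+ 2 - c * (beta + c) = 0.
    move/eqP: E; rewrite mulf_eq0 => /orP [|/eqP //]; rewrite mulf_eq0 => /orP [|]; last by rewrite (negbTE wn0).
    by rewrite pnatr_eq0.
  move/eqP; rewrite subr_eq0 => /eqP ->; done.
Qed.
Definition disc4 {R : comNzRingType} (b c d e : R) : R :=
  256*e^+3 - 192*b*d*e^+2 - 128*c^+2*e^+2 + 144*c*d^+2*e - 27*d^+4 + 144*b^+2*c*e^+2
  - 6*b^+2*d^+2*e - 80*b*c^+2*d*e + 18*b*c*d^+3 + 16*c^+4*e - 4*c^+3*d^+2 - 27*b^+4*e^+2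
  + 18*b^+3*c*d*e - 4*b^+3*d^+3 - 4*b^+2*c^+3*e + b^+2*c^+2*d^+2.

Definition Dq {R : fieldType} (c d beta : R) : R :=
  disc4 (2 * d) (2 * c + d ^+ 2) (d * (beta / 2 + 2 * c)) (c * (beta + c)).

Lemma disc4_quads {R : comNzRingType} (a1 b1 a2 b2 : R) :
  disc4 (a1 + a2) (b1 + b2 + a1 * a2) (a1 * b2 + a2 * b1) (b1 * b2) =
  (a1 ^+ 2 - 4 * b1) * (a2 ^+ 2 - 4 * b2) *
  ((b1 - b2) ^+ 2 - a1 * (a1 - a2) * (b1 - b2) + b1 * (a1 - a2) ^+ 2) ^+ 2.
Proof. rewrite /disc4; ring. Qed.

Lemma Rr0 {R : realFieldType} (a1 b1 a2 b2 : R) : a1 ^+ 2 - 4 * b1 < 0 ->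
  (b1 - b2) ^+ 2 - a1 * (a1 - a2) * (b1 - b2) + b1 * (a1 - a2) ^+ 2 = 0 ->
  a1 = a2 /\ b1 = b2.
Proof.
move=> hD hR.
have E : 4 * ((b1 - b2) ^+ 2 - a1 * (a1 - a2) * (b1 - b2) + b1 * (a1 - a2) ^+ 2) =
  (2 * (b1 - b2) - a1 * (a1 - a2)) ^+ 2 + (a1 - a2) ^+ 2 * (4 * b1 - a1 ^+ 2) by ring.
rewrite hR mulr0 in E.
have h1 : 0 <= (2 * (b1 - b2) - a1 * (a1 - a2)) ^+ 2 by apply: sqr_ge0.
have h2 : 0 <= (a1 - a2) ^+ 2 by apply: sqr_ge0.
have h3 : (a1 - a2) ^+ 2 * (4 * b1 - a1 ^+ 2) = 0 by nra.
have hu : a1 - a2 = 0.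
  move/eqP: h3; rewrite mulf_eq0 => /orP [|/eqP h]; first by rewrite sqrf_eq0 => /eqP.
  lra.
have h4 : (2 * (b1 - b2) - a1 * (a1 - a2)) ^+ 2 = 0 by nra.
move/eqP: h4; rewrite sqrf_eq0 hu mulr0 subr0 mulf_eq0 pnatr_eq0 /= => /eqP hv.
by split; apply/eqP; rewrite -subr_eq0; apply/eqP.
Qed.

Lemma q_neg {R : rcfType} (c d beta : R) : 0 < d -> 0 < beta -> 4 * c < d ^+ 2 ->
  exists x, (qbeta c d beta).[x] < 0.
Proof.
move=> d0 b0 h; set S := Num.sqrt (d ^+ 2 - 4 * c).
have hS : S ^+ 2 = d ^+ 2 - 4 * c by rewrite sqr_sqrtr //; lra.
have S0 : 0 < S by rewrite sqrtr_gt0; lra.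
clearbody S.
exists ((- d - S) / 2); rewrite hornerq.
have -> : ((- d - S) / 2) ^+ 4 + 2 * d * ((- d - S) / 2) ^+ 3 + (2 * c + d ^+ 2) * ((- d - S) / 2) ^+ 2 +
  d * (beta / 2 + 2 * c) * ((- d - S) / 2) + c * (beta + c) =
  (((- d - S) / 2) ^+ 2 + d * ((- d - S) / 2) + c) ^+ 2 + beta * (d * ((- d - S) / 2) / 2 + c) by ring.
have -> : ((- d - S) / 2) ^+ 2 + d * ((- d - S) / 2) + c = (S ^+ 2 - d ^+ 2 + 4 * c) / 4 by field.
rewrite hS.
have -> : d * ((- d - S) / 2) / 2 + c = - (S ^+ 2 + d * S) / 4.
  by rewrite hS; field.
have : 0 < S ^+ 2 + d * S by nra.
nra.
Qed.

Lemma count_lemma {R : rcfType} (c d beta : R) : 0 < d -> 0 < beta ->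
  [/\ d ^+ 2 < 4 * c -> 0 < Dq c d beta -> nreal_roots (qbeta c d beta) = 0%N,
      d ^+ 2 < 4 * c -> Dq c d beta <= 0 -> nreal_roots (qbeta c d beta) = 2%N,
      Dq c d beta < 0 -> nreal_roots (qbeta c d beta) = 2%N &
      4 * c < d ^+ 2 -> 0 <= Dq c d beta -> nreal_roots (qbeta c d beta) = 4%N].
Proof.
move=> d0 b0.
have [a1 [b1 [a2 [b2 [e3 e2 e1 e0]]]]] := @qbeta_factor R c d beta d0 b0.
have hD : Dq c d beta = (a1 ^+ 2 - 4 * b1) * (a2 ^+ 2 - 4 * b2) *
  ((b1 - b2) ^+ 2 - a1 * (a1 - a2) * (b1 - b2) + b1 * (a1 - a2) ^+ 2) ^+ 2.
  by rewrite /Dq e3 e2 e1 e0 disc4_quads.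
have hR2 : (b1 - b2) ^+ 2 - a1 * (a1 - a2) * (b1 - b2) + b1 * (a1 - a2) ^+ 2 =
  (b2 - b1) ^+ 2 - a2 * (a2 - a1) * (b2 - b1) + b2 * (a2 - a1) ^+ 2 by ring.
set Rr := _ - _ + _ in hD hR2.
rewrite (qbeta_quad e3 e2 e1 e0) nreal_quad2 /nq.
set D1 := a1 ^+ 2 - 4 * b1 in hD *; set D2 := a2 ^+ 2 - 4 * b2 in hD *.
have noteq : ~ (a1 = a2 /\ b1 = b2).
  case=> ea eb; move: e1 e2 e3; rewrite -ea -eb => e1 e2 e3.
  have ha : a1 = d by lra.
  have hb : b1 = c by rewrite ha in e2; lra.
  rewrite ha hb in e1.
  have : d * beta = 0 by lra.
  nra.
have newton : d ^+ 2 < 4 * c -> 0 <= D1 -> 0 <= D2 -> False.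
  move=> h h1 h2.
  have k1 : 3 * (a1 + a2) ^+ 2 - 8 * (b1 + b2 + a1 * a2) = 4 * d ^+ 2 - 16 * c.
    by rewrite -e3 -e2; ring.
  have k2 : 3 * (a1 + a2) ^+ 2 - 8 * (b1 + b2 + a1 * a2) = (a1 - a2) ^+ 2 + 2 * D1 + 2 * D2.
    by rewrite /D1 /D2; ring.
  have : 0 <= (a1 - a2) ^+ 2 by apply: sqr_ge0.
  lra.
have R1 : D1 < 0 -> Rr != 0.
  move=> h; apply/eqP => hr; apply: noteq; exact: Rr0 h hr.
have R2 : D2 < 0 -> Rr != 0.
  move=> h; apply/eqP => hr; apply: noteq.
  have [] := @Rr0 _ a2 b2 a1 b1 h (etrans (esym hR2) hr) => -> ->; done.
have Rsq : Rr != 0 -> 0 < Rr ^+ 2.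
  by move=> h; rewrite lt_neqAle sqr_ge0 andbT eq_sym sqrf_eq0.
split.
- move=> h hp; rewrite hD in hp; case: ifP => h1; case: ifP => h2 //.
  + by exfalso; exact: newton h h1 h2.
  + have : D2 < 0 by rewrite ltNge h2.
    move=> h2'; have := Rsq (R2 h2'); move=> hs; exfalso.
    have : D1 * D2 <= 0 by nra.
    nra.
  + have : D1 < 0 by rewrite ltNge h1.
    move=> h1'; have := Rsq (R1 h1'); move=> hs; exfalso.
    have : D1 * D2 <= 0 by nra.
    nra.
- move=> h hp; rewrite hD in hp; case: ifP => h1; case: ifP => h2 //.
  + by exfalso; exact: newton h h1 h2.
  + have h1' : D1 < 0 by rewrite ltNge h1.
    have h2' : D2 < 0 by rewrite ltNge h2.
    have := Rsq (R1 h1'); move=> hs; exfalso.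
    have : 0 < D1 * D2 by nra.
    nra.
- move=> hp; rewrite hD in hp; case: ifP => h1; case: ifP => h2 //; exfalso.
  + have : 0 <= D1 * D2 by nra.
    have : 0 <= Rr ^+ 2 by apply: sqr_ge0.
    nra.
  + have h1' : D1 < 0 by rewrite ltNge h1.
    have h2' : D2 < 0 by rewrite ltNge h2.
    have : 0 < D1 * D2 by nra.
    have : 0 <= Rr ^+ 2 by apply: sqr_ge0.
    nra.
- move=> h hp; rewrite hD in hp.
  have [x hx] := @q_neg R c d beta d0 b0 h.
  rewrite (qbeta_quad e3 e2 e1 e0) hornerM !hornerquad in hx.
  have E1 : 4 * (x ^+ 2 + a1 * x + b1) = (2 * x + a1) ^+ 2 - D1 by rewrite /D1; ring.
  have E2 : 4 * (x ^+ 2 + a2 * x + b2) = (2 * x + a2) ^+ 2 - D2 by rewrite /D2; ring.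
  have s1 : 0 <= (2 * x + a1) ^+ 2 by apply: sqr_ge0.
  have s2 : 0 <= (2 * x + a2) ^+ 2 by apply: sqr_ge0.
  have : 0 < D1 \/ 0 < D2.
    case: (ltP 0 D1) => hh; first by left.
    right; nra.
  case=> hpos.
  + rewrite (ltW hpos); case: ifP => h2 //.
    have h2' : D2 < 0 by rewrite ltNge h2.
    have := Rsq (R2 h2'); move=> hs; exfalso.
    have : D1 * D2 < 0 by nra.
    nra.
  + rewrite (ltW hpos); case: ifP => h1 //.
    have h1' : D1 < 0 by rewrite ltNge h1.
    have := Rsq (R1 h1'); move=> hs; exfalso.
    have : D1 * D2 < 0 by nra.
    nra.
Qed.
Section Detl.
Variable R : comNzRingType.

Definition nbump (j k : nat) : nat := if Nat.leb j k then k.+1 else k.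
Lemma lebE j k : Nat.leb j k = (j <= k)%N.
Proof. by elim: j k => [|j IH] [|k] //=; rewrite IH. Qed.
Lemma nbumpE j k : nbump j k = bump j k.
Proof. by rewrite /nbump /bump lebE; case: (leqP j k). Qed.
Definition minorf (f : nat -> nat -> option R) (j : nat) : nat -> nat -> option R :=
  fun i k => f i.+1 (nbump j k).

Fixpoint detl (n : nat) (f : nat -> nat -> option R) {struct n} : R :=
  match n with
  | 0 => 1
  | n'.+1 => foldr (fun j acc => match f 0%N j with
                                 | Some a => (-1) ^+ j * a * detl n' (minorf f j) + acc
                                 | None => acc end) 0 (iota 0 n'.+1)
  end.

Lemma foldr_sum (n : nat) (F : nat -> option R) (G : nat -> R) :
  foldr (fun j acc => match F j with Some a => a * G j + acc | None => acc end) 0 (iota 0 n)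
  = \sum_(j < n) odflt 0 (F j) * G j.
Proof.
rewrite -(big_mkord xpredT (fun j => odflt 0 (F j) * G j)).
rewrite /index_iota subn0.
elim: (iota 0 n) => [|x s IH]; first by rewrite big_nil.
rewrite big_cons /= IH; case: (F x) => [a|] //=; by rewrite mul0r add0r.
Qed.

Lemma detlE n (f : nat -> nat -> option R) :
  \det (\matrix_(i < n, j < n) odflt 0 (f i j)) = detl n f.
Proof.
elim: n f => [|n IH] f; first by rewrite det_mx00.
rewrite (expand_det_row _ ord0) /=.
have := foldr_sum n.+1 (f 0%N) (fun j => (-1) ^+ j * detl n (minorf f j)).
move=> H.
transitivity (\sum_(j < n.+1) odflt 0 (f 0%N j) * ((-1) ^+ j * detl n (minorf f j))).
  apply: eq_bigr => j _; rewrite mxE /cofactor add0n; congr (_ * (_ * _)).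
  rewrite -IH; congr (\det _); apply/matrixP => i k; rewrite !mxE /minorf /= nbumpE.
  by [].
rewrite -H; symmetry.
have fe : forall s : seq nat, foldr (fun j acc => match f 0%N j with Some a => (-1) ^+ j * a * detl n (minorf f j) + acc | None => acc end) 0 s
 = foldr (fun j acc => match f 0%N j with Some a => a * ((-1) ^+ j * detl n (minorf f j)) + acc | None => acc end) 0 s.
  elim => [|x s IHs] //=; case: (f 0%N x) => [a|] //=; by rewrite IHs mulrA (mulrC a).
exact: (fe (iota 0 n.+1)).
Qed.
End Detl.
Arguments detl {R}. Arguments minorf {R}.
Definition fS {R : nzRingType} (p q : {poly R}) (i j : nat) : option R :=
  if Nat.ltb i 3 then (if Nat.leb i j && Nat.leb (Nat.sub j i) 4 then Some p`_(Nat.sub j i) else None)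
  else if Nat.leb (Nat.sub i 3) j && Nat.leb (Nat.sub j (Nat.sub i 3)) 3 then Some q`_(Nat.sub j (Nat.sub i 3)) else None.

Lemma res54 (R : comNzRingType) (p q : {poly R}) : size p = 5%N -> size q = 4%N ->
  resultant p q = detl 7 (fS p q).
Proof.
move=> hp hq; rewrite /resultant -detlE.
have E := @Sylvester_mxE _ p q.
move: (Sylvester_mx p q) E.
rewrite hp hq /= => M E; congr (\det _); apply/matrixP => i j.
have E' : M i j = if (i < 3)%N then p`_(j - i) *+ (i <= j) else q`_(j - (i - 3)) *+ (i - 3 <= j)%N.
  by rewrite E; case: splitP => k -> //=; rewrite addKn.
rewrite E' mxE /fS {E E'}.
case: i => [[|[|[|[|[|[|[|i]]]]]]] Hi] //; case: j => [[|[|[|[|[|[|[|j]]]]]]] Hj] //=;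
  rewrite ?(nth_default _ (leqnn _)) ?hp ?hq //.
all: try (apply: nth_default; rewrite ?hp ?hq //).


Qed.

Lemma disc_quartic (R : numFieldType) (p : {poly R}) : size p = 5%N -> p`_4 = 1 ->
  disc p = disc4 p`_3 p`_2 p`_1 p`_0.
Proof.
move=> hp h4.
have hd : size p^`() = 4%N.
  apply/anti_leq/andP; split.
    by have := lt_size_deriv (p := p); rewrite hp; apply; rewrite -size_poly_gt0 hp.
  rewrite ltnNge; apply/negP => /leq_sizeP/(_ 3%N (leqnn 3)).
  by rewrite coef_deriv h4 => /eqP; rewrite pnatr_eq0.
rewrite /disc hp /= /lead_coef hp /= h4 invr1 res54 //.
rewrite /detl /minorf /nbump /fS /= !coef_deriv h4.
rewrite /disc4.
ring.
Qed.
Lemma qbeta_coef {R : fieldType} (c d beta : R) (i : nat) :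
  (qbeta c d beta)`_i = if i == 4%N then 1 else if i == 3%N then 2 * d
    else if i == 2%N then 2 * c + d ^+ 2 else if i == 1%N then d * (beta / 2 + 2 * c)
    else if i == 0%N then c * (beta + c) else 0.
Proof.
rewrite /qbeta !coefE.
case: i => [|[|[|[|[|i]]]]] /=; rewrite ?mulr0 ?mulr1 ?addr0 ?add0r //.
Qed.

Lemma Delta_Dq {R : numFieldType} (c beta d : R) : Delta_q c beta d = Dq c d beta.
Proof.
have hs : size (qbeta c d beta) = 5%N.
  apply/anti_leq/andP; split.
    by apply/leq_sizeP => j hj; rewrite qbeta_coef; case: j hj => [|[|[|[|[|j]]]]].
  rewrite ltnNge; apply/negP => /leq_sizeP/(_ 4%N (leqnn 4)).
  by rewrite qbeta_coef /= => /eqP; rewrite oner_eq0.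
rewrite /Delta_q disc_quartic //; last by rewrite qbeta_coef.
by rewrite /Dq !qbeta_coef.
Qed.

Definition Gc {R : fieldType} (c beta y : R) : R :=
  (beta / 2 - 4 * c) * y ^+ 3 + (18 * beta * c - 27 * beta ^+ 2 / 16) * y ^+ 2
  - 27 / 2 * beta ^+ 2 * c * y - 27 * beta ^+ 2 * c ^+ 2.

Lemma Dq_G {R : numFieldType} (c beta d : R) : Dq c d beta = beta ^+ 2 * Gc c beta (d ^+ 2 - 4 * c).
Proof. by rewrite /Dq /disc4 /Gc; field. Qed.
Section Cubic.
Context {R : rcfType}.
Implicit Types c beta y : R.

Lemma GcE c beta y : Gc c beta y =
  (beta / 2 - 4 * c) * y ^+ 3 + (18 * beta * c - 27 * beta ^+ 2 / 16) * y ^+ 2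
  + (- (27 / 2 * beta ^+ 2 * c)) * y + (- (27 * beta ^+ 2 * c ^+ 2)).
Proof. rewrite /Gc; ring. Qed.

Lemma G_m4c c beta : Gc c beta (- (4 * c)) = 256 * c ^+ 3 * (beta + c).
Proof. by rewrite /Gc; field. Qed.

Lemma G_0 c beta : Gc c beta 0 = - (27 * beta ^+ 2 * c ^+ 2).
Proof. by rewrite /Gc; field. Qed.

Lemma G_4b c beta : Gc c beta (4 * beta - 4 * c) = (beta - 4 * c) ^+ 3 * (5 * beta - 4 * c).
Proof. by rewrite /Gc; field. Qed.

Lemma G_b4c c y : Gc c (4 * c) y = - c * (y - 12 * c) ^+ 2 * (2 * y + 3 * c).
Proof. by rewrite /Gc; field. Qed.

Lemma G_c0 beta y : Gc 0 beta y = y ^+ 2 * (beta / 2 * y - 27 * beta ^+ 2 / 16).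
Proof. by rewrite /Gc; field. Qed.

Lemma G_mono c beta a b : 0 < c -> 0 < beta -> - (4 * c) <= a -> a < b -> b <= 0 ->
  Gc c beta b < Gc c beta a.
Proof.
move=> c0 b0 ha hab hb.
pose u := - a; pose v := - b.
have E : Gc c beta a - Gc c beta b = (a - b) * ((beta / 2 - 4 * c) * (u ^+ 2 + u * v + v ^+ 2)
   - (18 * beta * c - 27 * beta ^+ 2 / 16) * (u + v) - 27 / 2 * beta ^+ 2 * c).
  by rewrite /Gc /u /v; field.
have u0 : 0 <= u by rewrite /u; lra.
have v0 : 0 <= v by rewrite /v; lra.
have u4 : u <= 4 * c by rewrite /u; lra.
have v4 : v <= 4 * c by rewrite /v; lra.
have uv : 0 < u + v by rewrite /u /v; lra.
have s1 : u ^+ 2 + u * v + v ^+ 2 <= 8 * c * (u + v) by nra.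
have s2 : 0 <= u ^+ 2 + u * v + v ^+ 2 by nra.
have s3 : beta / 2 * (u ^+ 2 + u * v + v ^+ 2) <= 4 * beta * c * (u + v) by nra.
have s4 : 27 * beta ^+ 2 / 16 * (u + v) <= 27 / 2 * beta ^+ 2 * c.
  have : 0 <= beta ^+ 2 by apply: sqr_ge0.
  nra.
have s5 : 0 < beta * c * (u + v) by rewrite mulr_gt0 // mulr_gt0.
have s6 : 0 <= c * (u ^+ 2 + u * v + v ^+ 2) by nra.
have br : (beta / 2 - 4 * c) * (u ^+ 2 + u * v + v ^+ 2)
   - (18 * beta * c - 27 * beta ^+ 2 / 16) * (u + v) - 27 / 2 * beta ^+ 2 * c < 0 by nra.
have : 0 < Gc c beta a - Gc c beta b by rewrite E; nra.
lra.
Qed.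

Lemma G_neg_i c beta y : 0 < c -> 0 < beta -> beta < 4 * c -> 0 < y -> Gc c beta y < 0.
Proof.
move=> c0 b0 hb y0.
pose a := 27 * (4 * c + y) ^+ 2 / 16.
pose b' := y ^+ 2 * (y + 36 * c) / 2.
have E : - Gc c beta y = a * beta ^+ 2 - b' * beta + 4 * c * y ^+ 3.
  by rewrite /Gc /a /b'; field.
have a0 : 0 < a by rewrite /a; nra.
suff : 0 < - Gc c beta y by lra.
rewrite E.
case: (lerP y (12 * c)) => hy.
  have E2 : 4 * a * (a * beta ^+ 2 - b' * beta + 4 * c * y ^+ 3) =
    (2 * a * beta - b') ^+ 2 + y ^+ 3 / 4 * (12 * c - y) ^+ 3.
    by rewrite /a /b'; field.
  have y3 : 0 < y ^+ 3 by rewrite exprn_gt0.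
  have t1 : 0 <= (2 * a * beta - b') ^+ 2 by apply: sqr_ge0.
  have t2 : 0 <= (12 * c - y) ^+ 3 by rewrite exprn_ge0 //; lra.
  have t3 : 0 <= y ^+ 3 / 4 * (12 * c - y) ^+ 3 by rewrite mulr_ge0 // divr_ge0 // ltW.
  suff : 0 < 4 * a * (a * beta ^+ 2 - b' * beta + 4 * c * y ^+ 3) by nra.
  rewrite E2.
  case: (ltP y (12 * c)) => hy2.
    have p1 : 0 < (12 * c - y) ^+ 3 by rewrite exprn_gt0 //; lra.
    have p2 : 0 < y ^+ 3 / 4 by lra.
    have : 0 < y ^+ 3 / 4 * (12 * c - y) ^+ 3 by apply: mulr_gt0.
    lra.
  have ey : y = 12 * c by lra.
  have : 2 * a * beta - b' = 864 * c ^+ 2 * (beta - 4 * c) by rewrite /a /b' ey; field.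
  move=> ->.
  have hneg : 864 * c ^+ 2 * (beta - 4 * c) < 0.
    have : 0 < c ^+ 2 by rewrite exprn_gt0.
    nra.
  have : 0 < (864 * c ^+ 2 * (beta - 4 * c)) ^+ 2 by nra.
  lra.
have E3 : a * beta ^+ 2 - b' * beta + 4 * c * y ^+ 3 =
  (beta - 4 * c) * (a * (beta + 4 * c) - b') + c * (y - 12 * c) ^+ 2 * (2 * y + 3 * c).
  by rewrite /a /b'; field.
have k1 : 27 * c * (4 * c + y) ^+ 2 <= y ^+ 2 * (y + 36 * c).
  have : y ^+ 2 * (y + 36 * c) - 27 * c * (4 * c + y) ^+ 2 = (y - 12 * c) * (y ^+ 2 + 21 * c * y + 36 * c ^+ 2).
    by ring.
  have : 0 < y ^+ 2 + 21 * c * y + 36 * c ^+ 2 by nra.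
  nra.
have k2 : a * (beta + 4 * c) - b' < 0.
  have : a * (beta + 4 * c) < a * (8 * c) by rewrite ltr_pM2l //; lra.
  have : a * (8 * c) <= b' by rewrite /a /b'; nra.
  lra.
have k3 : 0 <= c * (y - 12 * c) ^+ 2 * (2 * y + 3 * c).
  by rewrite mulr_ge0 // ?mulr_ge0 ?sqr_ge0 //; lra.
rewrite E3; nra.
Qed.

Lemma G_factor c beta y1 y2 : y1 != y2 -> Gc c beta y1 = 0 -> Gc c beta y2 = 0 ->
  forall y, Gc c beta y = (y - y1) * (y - y2) *
     ((beta / 2 - 4 * c) * y + ((18 * beta * c - 27 * beta ^+ 2 / 16) + (beta / 2 - 4 * c) * (y1 + y2))).
Proof.
move=> ne h1 h2.
set A := beta / 2 - 4 * c; set B := 18 * beta * c - 27 * beta ^+ 2 / 16.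
set C := - (27 / 2 * beta ^+ 2 * c); set D := - (27 * beta ^+ 2 * c ^+ 2).
set E := B + A * (y1 + y2).
have H : forall y, Gc c beta y = (y - y1) * (y - y2) * (A * y + E) +
   ((C - A * y1 * y2 + E * (y1 + y2)) * y + (D - E * y1 * y2)).
  by move=> y; rewrite GcE /E /A /B /C /D; ring.
set u := C - A * y1 * y2 + E * (y1 + y2) in H; set w := D - E * y1 * y2 in H.
have e1 : u * y1 + w = 0 by move: (H y1); rewrite h1 subrr mul0r mul0r add0r => <-.
have e2 : u * y2 + w = 0 by move: (H y2); rewrite h2 subrr mulr0 mul0r add0r => <-.
have hu : u = 0.
  have : u * (y1 - y2) = 0 by rewrite mulrBr; lra.
  by move/eqP; rewrite mulf_eq0 subr_eq0 (negbTE ne) orbF => /eqP.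
have hw : w = 0 by rewrite hu mul0r add0r in e1.
by move=> y; rewrite H hu hw mul0r !addr0.
Qed.

End Cubic.
Section Helpers.
Context {R : rcfType}.

Lemma count_G (c beta d : R) : 0 < d -> 0 < beta ->
  [/\ d ^+ 2 - 4 * c < 0 -> 0 < Gc c beta (d ^+ 2 - 4 * c) -> nreal_roots (qbeta c d beta) = 0%N,
      d ^+ 2 - 4 * c < 0 -> Gc c beta (d ^+ 2 - 4 * c) <= 0 -> nreal_roots (qbeta c d beta) = 2%N,
      Gc c beta (d ^+ 2 - 4 * c) < 0 -> nreal_roots (qbeta c d beta) = 2%N &
      0 < d ^+ 2 - 4 * c -> 0 <= Gc c beta (d ^+ 2 - 4 * c) -> nreal_roots (qbeta c d beta) = 4%N].
Proof.
move=> d0 b0; have [h1 h2 h3 h4] := @count_lemma R c d beta d0 b0.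
have bb : 0 < beta ^+ 2 by rewrite exprn_gt0.
rewrite Dq_G in h1 h2 h3 h4.
split => [hy hg|hy hg|hg|hy hg].
- apply: h1; [lra | exact: mulr_gt0].
- apply: h2; [lra | nra].
- apply: h3; nra.
- apply: h4; [lra | nra].
Qed.

Lemma zero_G (c beta d : R) : 0 < beta ->
  (Delta_q c beta d == 0) = (Gc c beta (d ^+ 2 - 4 * c) == 0).
Proof.
move=> b0; rewrite Delta_Dq Dq_G mulf_eq0 expf_eq0 /= (gt_eqF b0) //.
Qed.

Lemma cmp_sqrt (d e : R) : 0 <= d -> 0 <= e ->
  [/\ (d < Num.sqrt e) = (d ^+ 2 < e), (Num.sqrt e <= d) = (e <= d ^+ 2),
      (d == Num.sqrt e) = (d ^+ 2 == e), (d <= Num.sqrt e) = (d ^+ 2 <= e) &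
      (Num.sqrt e < d) = (e < d ^+ 2)].
Proof.
move=> d0 e0.
have hd : d = Num.sqrt (d ^+ 2) by rewrite sqrtr_sqr ger0_norm.
have d2 : 0 <= d ^+ 2 by apply: sqr_ge0.
have l1 : (Num.sqrt e <= d) = (e <= d ^+ 2) by rewrite {1}hd ler_sqrt.
have l2 : (d <= Num.sqrt e) = (d ^+ 2 <= e) by rewrite {1}hd ler_sqrt.
split => //.
- by rewrite ltNge l1 -ltNge.
- by rewrite {1}hd eqr_sqrt.
- by rewrite ltNge l2 -ltNge.
Qed.

Lemma two_sqrt (c : R) : 0 <= c -> 2 * Num.sqrt c = Num.sqrt (4 * c).
Proof.
move=> c0; rewrite sqrtrM ?ler0n //.
have -> : (4 : R) = 2 ^+ 2 by rewrite -natrX.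
by rewrite sqrtr_sqr ger0_norm.
Qed.

Lemma root_left (c beta : R) : 0 < c -> 0 < beta ->
  exists y1, [/\ - (4 * c) < y1 < 0, Gc c beta y1 = 0 &
    forall y, - (4 * c) <= y <= 0 -> (y < y1 -> 0 < Gc c beta y) /\ (y1 < y -> Gc c beta y < 0)].
Proof.
move=> c0 b0.
have hp : ((beta / 2 - 4 * c) * (- (4 * c)) ^+ 3 + (18 * beta * c - 27 * beta ^+ 2 / 16) * (- (4 * c)) ^+ 2
  + (- (27 / 2 * beta ^+ 2 * c)) * (- (4 * c)) + (- (27 * beta ^+ 2 * c ^+ 2))) *
  ((beta / 2 - 4 * c) * 0 ^+ 3 + (18 * beta * c - 27 * beta ^+ 2 / 16) * 0 ^+ 2
  + (- (27 / 2 * beta ^+ 2 * c)) * 0 + (- (27 * beta ^+ 2 * c ^+ 2))) < 0.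
  rewrite -!GcE G_m4c G_0.
  have : 0 < 256 * c ^+ 3 * (beta + c) by rewrite !mulr_gt0 ?exprn_gt0 //; lra.
  have : 0 < 27 * beta ^+ 2 * c ^+ 2 by rewrite !mulr_gt0 ?exprn_gt0.
  nra.
have hle : - (4 * c) <= 0 by lra.
have [y1 [/andP [l r] e]] := @ivt3oo R _ _ _ _ _ _ hle hp.
rewrite -GcE in e.
exists y1; split => //; first by rewrite l r.
move=> y /andP [ya yb]; split => h.
- by rewrite -e; apply: G_mono => //; lra.
- by rewrite -e; apply: G_mono => //; lra.
Qed.

End Helpers.
Section Parts.
Context {R : rcfType}.

Lemma part_i (c beta : R) : 0 <= c -> 0 < beta -> beta < 4 * c ->
   exists d1 : R,
     [/\ 0 < d1 < 2 * Num.sqrt c,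
         (forall d, 0 <= d -> (Delta_q c beta d == 0) = (d == d1)) &
         forall d, 0 < d ->
           (d < d1 -> nreal_roots (qbeta c d beta) = 0%N) /\
           (d1 <= d -> nreal_roots (qbeta c d beta) = 2%N)].
Proof.
move=> c0' b0 hb.
have c0 : 0 < c by lra.
have [y1 [/andP [l r] e sg]] := @root_left _ c beta c0 b0.
have e0 : 0 <= y1 + 4 * c by lra.
exists (Num.sqrt (y1 + 4 * c)); split.
- rewrite sqrtr_gt0 two_sqrt // ltr_sqrt; last lra.
  have -> : 0 < y1 + 4 * c by lra.
  have -> : y1 + 4 * c < 4 * c by lra.
  done.
- move=> d d0; rewrite zero_G //.
  have [_ _ -> _ _] := @cmp_sqrt _ d _ d0 e0.
  apply/eqP/eqP => h.
  + case: (ltgtP (d ^+ 2 - 4 * c) 0) => hy.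
    * have hy' : - (4 * c) <= d ^+ 2 - 4 * c <= 0.
        have dd : 0 <= d ^+ 2 by apply: sqr_ge0.
        apply/andP; split; lra.
      have [s1 s2] := sg _ hy'.
      case: (ltgtP (d ^+ 2 - 4 * c) y1) => hh.
      - by have := s1 hh; rewrite h ltxx.
      - by have := s2 hh; rewrite h ltxx.
      - lra.
    * by have := @G_neg_i _ c beta _ c0 b0 hb hy; rewrite h ltxx.
    * have g0 : Gc c beta 0 < 0.
        rewrite G_0; have : 0 < 27 * beta ^+ 2 * c ^+ 2 by rewrite !mulr_gt0 ?exprn_gt0.
        lra.
      have : Gc c beta (d ^+ 2 - 4 * c) < 0 by rewrite hy.
      by rewrite h ltxx.
  + by rewrite (_ : d ^+ 2 - 4 * c = y1) //; lra.
- move=> d d0; have [k1 k2 k3 k4] := @count_G _ c beta d d0 b0.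
  have d0' := ltW d0.
  have [-> -> _ _ _] := @cmp_sqrt _ d _ d0' e0.
  have dd : 0 <= d ^+ 2 by apply: sqr_ge0.
  split => h.
  + apply: k1; first lra.
    have hr : - (4 * c) <= d ^+ 2 - 4 * c <= 0 by apply/andP; split; lra.
    have [s1 _] := sg (d ^+ 2 - 4 * c) hr.
    by apply: s1; lra.
  + case: (ltP (d ^+ 2 - 4 * c) 0) => hy.
      apply: k2 => //.
      have hr : - (4 * c) <= d ^+ 2 - 4 * c <= 0 by apply/andP; split; lra.
      have [_ s2] := sg (d ^+ 2 - 4 * c) hr.
      case: (ltP y1 (d ^+ 2 - 4 * c)) => hh; first by apply/ltW/s2.
      by rewrite (_ : d ^+ 2 - 4 * c = y1) ?e //; lra.
    apply: k3.
    case: (ltP 0 (d ^+ 2 - 4 * c)) => hy2; first exact: G_neg_i.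
    rewrite (_ : d ^+ 2 - 4 * c = 0); last by lra.
    rewrite G_0.
    have : 0 < 27 * beta ^+ 2 * c ^+ 2 by rewrite !mulr_gt0 ?exprn_gt0.
    lra.
Qed.

End Parts.
Section Parts2.
Context {R : rcfType}.

Lemma root_right (c beta : R) : 0 < c -> 4 * c < beta ->
  exists y2, 0 < y2 < 4 * beta - 4 * c /\ Gc c beta y2 = 0.
Proof.
move=> c0 hb.
have hp : ((beta / 2 - 4 * c) * 0 ^+ 3 + (18 * beta * c - 27 * beta ^+ 2 / 16) * 0 ^+ 2
  + (- (27 / 2 * beta ^+ 2 * c)) * 0 + (- (27 * beta ^+ 2 * c ^+ 2))) *
  ((beta / 2 - 4 * c) * (4 * beta - 4 * c) ^+ 3 + (18 * beta * c - 27 * beta ^+ 2 / 16) * (4 * beta - 4 * c) ^+ 2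
  + (- (27 / 2 * beta ^+ 2 * c)) * (4 * beta - 4 * c) + (- (27 * beta ^+ 2 * c ^+ 2))) < 0.
  rewrite -!GcE G_0 G_4b.
  have b0 : 0 < beta by lra.
  have : 0 < (beta - 4 * c) ^+ 3 * (5 * beta - 4 * c) by rewrite mulr_gt0 ?exprn_gt0 //; lra.
  have : 0 < 27 * beta ^+ 2 * c ^+ 2 by rewrite !mulr_gt0 ?exprn_gt0.
  nra.
have hle : 0 <= 4 * beta - 4 * c by lra.
have [y2 [/andP [l r] e]] := @ivt3oo R _ _ _ _ _ _ hle hp.
rewrite -GcE in e.
by exists y2; split => //; rewrite l r.
Qed.

Lemma part_iii (c beta : R) : 0 <= c -> 0 < beta -> 0 < 8 * c <= beta ->
   exists d1 d2 : R,
     [/\ 0 < d1 < 2 * Num.sqrt c,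
         2 * Num.sqrt c < d2 <= 2 * Num.sqrt beta,
         (forall d, 0 <= d ->
            (Delta_q c beta d == 0) = (d == d1) || (d == d2)) &
         forall d, 0 < d ->
           [/\ d < d1 -> nreal_roots (qbeta c d beta) = 0%N,
               d2 <= d -> nreal_roots (qbeta c d beta) = 4%N &
               d1 <= d < d2 -> nreal_roots (qbeta c d beta) = 2%N]].
Proof.
move=> c0' b0 /andP [h8 hb].
have c0 : 0 < c by lra.
have [y1 [/andP [l1 r1] e1 _]] := @root_left _ c beta c0 b0.
have hb4 : 4 * c < beta by lra.
have [y2 [/andP [l2 r2] e2]] := @root_right c beta c0 hb4.
have ne : y1 != y2 by rewrite lt_eqF //; lra.
have F := @G_factor _ c beta y1 y2 ne e1 e2.
set A := beta / 2 - 4 * c in F; set E := _ + A * (y1 + y2) in F.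
have A0 : 0 <= A by rewrite /A; lra.
have Lm : 0 < A * (- (4 * c)) + E.
  have := F (- (4 * c)); rewrite G_m4c => h.
  have p1 : 0 < 256 * c ^+ 3 * (beta + c) by rewrite !mulr_gt0 ?exprn_gt0 //; lra.
  have p2 : 0 < (- (4 * c) - y1) * (- (4 * c) - y2) by nra.
  rewrite h in p1.
  by rewrite (pmulr_rgt0 _ p2) in p1.
have L0 : forall y, - (4 * c) <= y -> 0 < A * y + E by move=> y hy; nra.
have e1' : 0 <= y1 + 4 * c by lra.
have e2' : 0 <= y2 + 4 * c by lra.
exists (Num.sqrt (y1 + 4 * c)), (Num.sqrt (y2 + 4 * c)); split.
- rewrite sqrtr_gt0 two_sqrt // ltr_sqrt; last lra.
  have -> : 0 < y1 + 4 * c by lra.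
  by have -> : y1 + 4 * c < 4 * c by lra.
- rewrite !two_sqrt //; last lra.
  rewrite ltr_sqrt; last lra.
  rewrite ler_sqrt; last lra.
  have -> : 4 * c < y2 + 4 * c by lra.
  by have -> : y2 + 4 * c <= 4 * beta by lra.
- move=> d d0; rewrite zero_G //.
  have [_ _ -> _ _] := @cmp_sqrt _ d _ d0 e1'.
  have [_ _ -> _ _] := @cmp_sqrt _ d _ d0 e2'.
  have dd : 0 <= d ^+ 2 by apply: sqr_ge0.
  rewrite F mulf_eq0 (gt_eqF (L0 _ _)); last by lra.
  rewrite orbF mulf_eq0 !subr_eq0.
  apply/idP/idP => /orP [] /eqP h; apply/orP; [left|right|left|right]; apply/eqP; lra.
- move=> d d0; have [k1 k2 k3 k4] := @count_G _ c beta d d0 b0.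
  have d0' := ltW d0.
  have [-> _ _ _ _] := @cmp_sqrt _ d _ d0' e1'.
  have [_ -> _ _ _] := @cmp_sqrt _ d _ d0' e1'.
  have [h2a h2b _ _ _] := @cmp_sqrt _ d _ d0' e2'.
  rewrite h2a h2b.
  have dd : 0 <= d ^+ 2 by apply: sqr_ge0.
  have hy4 : - (4 * c) <= d ^+ 2 - 4 * c by lra.
  have Ly := L0 (d ^+ 2 - 4 * c) hy4.
  split => [h|h|/andP [h h']].
  + apply: k1; first lra.
    rewrite F; apply: mulr_gt0 Ly.
    nra.
  + apply: k4; first lra.
    rewrite F; apply: mulr_ge0 (ltW Ly).
    nra.
  + case: (ltP (d ^+ 2 - 4 * c) 0) => hy.
      apply: k2 => //; rewrite F.
      have : (d ^+ 2 - 4 * c - y1) * (d ^+ 2 - 4 * c - y2) <= 0 by nra.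
      nra.
    apply: k3; rewrite F.
    have : (d ^+ 2 - 4 * c - y1) * (d ^+ 2 - 4 * c - y2) < 0 by nra.
    nra.
Qed.

End Parts2.
Section Parts3.
Context {R : rcfType}.

Lemma part_ii_eq (c : R) : 0 < c ->
   exists d1 d2 d3 : R,
     [/\ 0 < d1 < 2 * Num.sqrt c,
         2 * Num.sqrt c < d2 <= 2 * Num.sqrt (4 * c),
         2 * Num.sqrt (4 * c) <= d3,
         (forall d, 0 <= d ->
            (Delta_q c (4 * c) d == 0) = [|| d == d1, d == d2 | d == d3]) &
         forall d, 0 < d ->
           [/\ d < d1 -> nreal_roots (qbeta c d (4 * c)) = 0%N,
               d2 <= d <= d3 -> nreal_roots (qbeta c d (4 * c)) = 4%N &
               (d1 <= d < d2) || (d3 < d) ->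
                 nreal_roots (qbeta c d (4 * c)) = 2%N]].
Proof.
move=> c0.
have b0 : 0 < 4 * c by lra.
have e1' : 0 <= - (3 * c / 2) + 4 * c by lra.
have e2' : 0 <= 16 * c by lra.
have t2 : 2 * Num.sqrt (4 * c) = Num.sqrt (16 * c).
  by rewrite two_sqrt; [congr Num.sqrt; ring | lra].
rewrite t2.
exists (Num.sqrt (- (3 * c / 2) + 4 * c)), (Num.sqrt (16 * c)), (Num.sqrt (16 * c)); split.
- rewrite sqrtr_gt0 two_sqrt // ?ltr_sqrt; [|lra|lra].
  have -> : 0 < - (3 * c / 2) + 4 * c by lra.
  by have -> : - (3 * c / 2) + 4 * c < 4 * c by lra.
- rewrite two_sqrt ?ltr_sqrt ?lexx ?andbT; [lra|lra|lra].
- by rewrite lexx.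
- move=> d d0; rewrite zero_G // G_b4c.
  have [_ _ -> _ _] := @cmp_sqrt _ d _ d0 e1'.
  have [_ _ -> _ _] := @cmp_sqrt _ d _ d0 e2'.
  rewrite !mulf_eq0 oppr_eq0 (gt_eqF c0) /= !orbb !subr_eq0.
  apply/idP/idP => /orP [] /eqP h; apply/orP; [right|left|right|left]; apply/eqP; lra.
- move=> d d0; have [k1 k2 k3 k4] := @count_G _ c (4 * c) d d0 b0.
  have d0' := ltW d0.
  have [h1a h1b _ _ _] := @cmp_sqrt _ d _ d0' e1'.
  have [h2a h2b h2c h2d h2e] := @cmp_sqrt _ d _ d0' e2'.
  rewrite h1a h1b h2a h2b h2d h2e.
  have dd : 0 <= d ^+ 2 by apply: sqr_ge0.
  rewrite G_b4c in k1 k2 k3 k4.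
  split => [h|/andP [h h']|/orP [/andP [h h']|h]].
  + apply: k1; first lra.
    have sq : 0 < (d ^+ 2 - 4 * c - 12 * c) ^+ 2 by rewrite lt_neqAle sqr_ge0 andbT eq_sym sqrf_eq0 subr_eq0 lt_eqF //; lra.
    have p : 0 < c * (d ^+ 2 - 4 * c - 12 * c) ^+ 2 by apply: mulr_gt0.
    have : 2 * (d ^+ 2 - 4 * c) + 3 * c < 0 by lra.
    nra.
  + apply: k4; first lra.
    rewrite (_ : d ^+ 2 - 4 * c - 12 * c = 0); last lra.
    by rewrite expr0n /= !mulr0 mul0r.
  + have sq : 0 < (d ^+ 2 - 4 * c - 12 * c) ^+ 2 by rewrite lt_neqAle sqr_ge0 andbT eq_sym sqrf_eq0 subr_eq0 lt_eqF //; lra.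
    have p : 0 < c * (d ^+ 2 - 4 * c - 12 * c) ^+ 2 by apply: mulr_gt0.
    case: (ltP (d ^+ 2 - 4 * c) 0) => hy.
      apply: k2 => //.
      have : 0 <= 2 * (d ^+ 2 - 4 * c) + 3 * c by lra.
      nra.
    apply: k3.
    have : 0 < 2 * (d ^+ 2 - 4 * c) + 3 * c by lra.
    nra.
  + have sq : 0 < (d ^+ 2 - 4 * c - 12 * c) ^+ 2 by rewrite lt_neqAle sqr_ge0 andbT eq_sym sqrf_eq0 subr_eq0 gt_eqF //; lra.
    have p : 0 < c * (d ^+ 2 - 4 * c - 12 * c) ^+ 2 by apply: mulr_gt0.
    apply: k3.
    have : 0 < 2 * (d ^+ 2 - 4 * c) + 3 * c by lra.
    nra.
Qed.

End Parts3.
Section Parts4.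
Context {R : rcfType}.

Lemma sgn3_lem (a b c A : R) : A < 0 ->
  [/\ a < 0 -> b < 0 -> c < 0 -> 0 < A * (a * b * c),
      0 <= a -> 0 <= b -> c <= 0 -> 0 <= A * (a * b * c),
      0 <= a -> b < 0 -> c < 0 -> A * (a * b * c) <= 0,
      0 < a -> b < 0 -> c < 0 -> A * (a * b * c) < 0 &
      0 < a -> 0 < b -> 0 < c -> A * (a * b * c) < 0].
Proof.
move=> hA; split=> ha hb hc.
- have p : 0 < a * b by nra.
  have : a * b * c < 0 by nra.
  nra.
- have p : 0 <= a * b by nra.
  have : a * b * c <= 0 by nra.
  nra.
- have p : a * b <= 0 by nra.
  have : 0 <= a * b * c by nra.
  nra.
- have p : a * b < 0 by nra.
  have : 0 < a * b * c by nra.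
  nra.
- have p : 0 < a * b by nra.
  have : 0 < a * b * c by nra.
  nra.
Qed.

Lemma part_ii_gt (c beta : R) : 0 < c -> 4 * c < beta -> beta < 8 * c ->
   exists d1 d2 d3 : R,
     [/\ 0 < d1 < 2 * Num.sqrt c,
         2 * Num.sqrt c < d2 <= 2 * Num.sqrt beta,
         2 * Num.sqrt beta <= d3,
         (forall d, 0 <= d ->
            (Delta_q c beta d == 0) = [|| d == d1, d == d2 | d == d3]) &
         forall d, 0 < d ->
           [/\ d < d1 -> nreal_roots (qbeta c d beta) = 0%N,
               d2 <= d <= d3 -> nreal_roots (qbeta c d beta) = 4%N &
               (d1 <= d < d2) || (d3 < d) ->
                 nreal_roots (qbeta c d beta) = 2%N]].
Proof.
move=> c0 hb4 hb8.
have b0 : 0 < beta by lra.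
have [y1 [/andP [l1 r1] e1 _]] := @root_left _ c beta c0 b0.
have [y2 [/andP [l2 r2] e2]] := @root_right _ c beta c0 hb4.
have ne : y1 != y2 by rewrite lt_eqF //; lra.
have F := @G_factor _ c beta y1 y2 ne e1 e2.
set A := beta / 2 - 4 * c in F; set E := _ + A * (y1 + y2) in F.
have A0 : A < 0 by rewrite /A; lra.
have An : A != 0 by rewrite lt_eqF.
pose y3 := - E / A.
have LE : forall y, A * y + E = A * (y - y3) by move=> y; rewrite /y3; field.
have y3b : 4 * beta - 4 * c < y3.
  have := F (4 * beta - 4 * c); rewrite G_4b LE => h.
  have p1 : 0 < (beta - 4 * c) ^+ 3 * (5 * beta - 4 * c) by rewrite mulr_gt0 ?exprn_gt0 //; lra.
  have p2 : 0 < (4 * beta - 4 * c - y1) * (4 * beta - 4 * c - y2) by nra.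
  rewrite h (pmulr_rgt0 _ p2) in p1.
  nra.
have e1' : 0 <= y1 + 4 * c by lra.
have e2' : 0 <= y2 + 4 * c by lra.
have e3' : 0 <= y3 + 4 * c by lra.
have G3 : forall y, Gc c beta y = A * ((y - y1) * (y - y2) * (y - y3)).
  by move=> y; rewrite F LE; ring.
exists (Num.sqrt (y1 + 4 * c)), (Num.sqrt (y2 + 4 * c)), (Num.sqrt (y3 + 4 * c)); split.
- rewrite sqrtr_gt0 (@two_sqrt _ _ (ltW c0)) ltr_sqrt; last lra.
  have -> : 0 < y1 + 4 * c by lra.
  by have -> : y1 + 4 * c < 4 * c by lra.
- rewrite (@two_sqrt _ _ (ltW c0)) (@two_sqrt _ _ (ltW b0)).
  rewrite ltr_sqrt; last lra.
  rewrite ler_sqrt; last lra.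
  have -> : 4 * c < y2 + 4 * c by lra.
  by have -> : y2 + 4 * c <= 4 * beta by lra.
- rewrite (@two_sqrt _ _ (ltW b0)) ler_sqrt; lra.
- move=> d d0; rewrite zero_G //.
  have [_ _ -> _ _] := @cmp_sqrt _ d _ d0 e1'.
  have [_ _ -> _ _] := @cmp_sqrt _ d _ d0 e2'.
  have [_ _ -> _ _] := @cmp_sqrt _ d _ d0 e3'.
  rewrite G3 !mulf_eq0 (negbTE An) /= !subr_eq0 -orbA.
  apply/idP/idP => /or3P [] /eqP h; apply/or3P; [apply: Or31|apply: Or32|apply: Or33|apply: Or31|apply: Or32|apply: Or33]; apply/eqP; lra.
- move=> d d0; have [k1 k2 k3 k4] := @count_G _ c beta d d0 b0.
  have d0' := ltW d0.
  have [h1a h1b _ _ _] := @cmp_sqrt _ d _ d0' e1'.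
  have [h2a h2b _ _ _] := @cmp_sqrt _ d _ d0' e2'.
  have [_ _ _ h3d h3e] := @cmp_sqrt _ d _ d0' e3'.
  rewrite h1a h1b h2a h2b h3d h3e.
  have dd : 0 <= d ^+ 2 by apply: sqr_ge0.
  rewrite G3 in k1 k2 k3 k4.
  set y := d ^+ 2 - 4 * c in k1 k2 k3 k4 *.
  have yE : y = d ^+ 2 - 4 * c by [].
  clearbody y.
  clear F LE G3 e1 e2 h1a h1b h2a h2b h3d h3e.
  have [s1 s2 s3 s4 s5] := @sgn3_lem (y - y1) (y - y2) (y - y3) A A0.
  split => [h|/andP [h h']|/orP [/andP [h h']|h]].
  + apply: k1; first lra.
    by apply: s1; lra.
  + apply: k4; first lra.
    by apply: s2; lra.
  + case: (ltP y 0) => hy.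
      by apply: k2 => //; apply: s3; lra.
    by apply: k3; apply: s4; lra.
  + by apply: k3; apply: s5; lra.
Qed.

End Parts4.
Section Parts5.
Context {R : rcfType}.

Lemma part_iv (beta : R) : 0 < beta ->
     (forall d, 0 <= d ->
        (Delta_q 0 beta d == 0) = (d == 0) || (d == Num.sqrt (27 * beta / 8))) /\
     (forall d, 0 < d ->
        (Num.sqrt (27 * beta / 8) <= d -> nreal_roots (qbeta 0 d beta) = 4%N) /\
        (d < Num.sqrt (27 * beta / 8) -> nreal_roots (qbeta 0 d beta) = 2%N)).
Proof.
move=> b0.
have e0 : 0 <= 27 * beta / 8 by lra.
have ey : forall d : R, d ^+ 2 - 4 * 0 = d ^+ 2 by move=> d; rewrite mulr0 subr0.
split.
- move=> d d0; rewrite zero_G // ey G_c0.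
  have [_ _ -> _ _] := @cmp_sqrt _ d _ d0 e0.
  rewrite mulf_eq0 !expf_eq0 /=.
  congr (_ || _); apply/eqP/eqP => h.
  + have : beta * (d ^+ 2 - 27 * beta / 8) = 2 * (beta / 2 * d ^+ 2 - 27 * beta ^+ 2 / 16) by field.
    rewrite h mulr0; move/eqP; rewrite mulf_eq0 (gt_eqF b0) /= subr_eq0 => /eqP //.
  + by rewrite h; field.
- move=> d d0; have [k1 k2 k3 k4] := @count_G _ 0 beta d d0 b0.
  have d0' := ltW d0.
  have [h1 h2 _ _ _] := @cmp_sqrt _ d _ d0' e0.
  rewrite h1 h2; rewrite !ey G_c0 in k1 k2 k3 k4.
  have dd : 0 < d ^+ 2 by rewrite exprn_gt0.
  have dd2 : 0 < (d ^+ 2) ^+ 2 by rewrite exprn_gt0.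
  split => h.
  + apply: k4 => //.
    have : 0 <= beta / 2 * d ^+ 2 - 27 * beta ^+ 2 / 16 by nra.
    nra.
  + apply: k3.
    have : beta / 2 * d ^+ 2 - 27 * beta ^+ 2 / 16 < 0 by nra.
    nra.
Qed.

End Parts5.
Theorem lemma3p4 (R : realType) (c beta : R) (hc : 0 <= c) (hbeta : 0 < beta) :
  (* (i) beta < 4c : unique non-negative zero d1; d2 = d3 = oo *)
  (beta < 4 * c ->
   exists d1 : R,
     [/\ 0 < d1 < 2 * Num.sqrt c,
         (forall d, 0 <= d -> (Delta_q c beta d == 0) = (d == d1)) &
         forall d, 0 < d ->
           (d < d1 -> nreal_roots (qbeta c d beta) = 0%N) /\
           (d1 <= d -> nreal_roots (qbeta c d beta) = 2%N)]) /\
  (* (ii) 4c <= beta < 8c : zeros d1, d2, d3 *)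
  (4 * c <= beta < 8 * c ->
   exists d1 d2 d3 : R,
     [/\ 0 < d1 < 2 * Num.sqrt c,
         2 * Num.sqrt c < d2 <= 2 * Num.sqrt beta,
         2 * Num.sqrt beta <= d3,
         (forall d, 0 <= d ->
            (Delta_q c beta d == 0) = [|| d == d1, d == d2 | d == d3]) &
         forall d, 0 < d ->
           [/\ d < d1 -> nreal_roots (qbeta c d beta) = 0%N,
               d2 <= d <= d3 -> nreal_roots (qbeta c d beta) = 4%N &
               (d1 <= d < d2) || (d3 < d) ->
                 nreal_roots (qbeta c d beta) = 2%N]]) /\
  (* (iii) beta >= 8c > 0 : zeros d1, d2; d3 = oo *)
  (0 < 8 * c <= beta ->
   exists d1 d2 : R,
     [/\ 0 < d1 < 2 * Num.sqrt c,
         2 * Num.sqrt c < d2 <= 2 * Num.sqrt beta,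
         (forall d, 0 <= d ->
            (Delta_q c beta d == 0) = (d == d1) || (d == d2)) &
         forall d, 0 < d ->
           [/\ d < d1 -> nreal_roots (qbeta c d beta) = 0%N,
               d2 <= d -> nreal_roots (qbeta c d beta) = 4%N &
               d1 <= d < d2 -> nreal_roots (qbeta c d beta) = 2%N]]) /\
  (* (iv) c = 0 : zeros d1 = 0, d2 = sqrt(27 beta / 8); d3 = oo *)
  (c = 0 ->
   let d2 := Num.sqrt (27 * beta / 8) in
     (forall d, 0 <= d ->
        (Delta_q c beta d == 0) = (d == 0) || (d == d2)) /\
     (forall d, 0 < d ->
        (d2 <= d -> nreal_roots (qbeta c d beta) = 4%N) /\
        (d < d2 -> nreal_roots (qbeta c d beta) = 2%N))).
Proof.
split; first by move=> hb; apply: part_i.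
split.
  move=> /andP [h4 h8]; have c0 : 0 < c by lra.
  case: (ltgtP beta (4 * c)) => hb.
  - by exfalso; lra.
  - exact: part_ii_gt.
  - by subst beta; apply: part_ii_eq.
split; first by move=> /andP [h8 hb]; apply: part_iii => //; rewrite h8 hb.
move=> c0; subst c; exact: part_iv.
Qed.
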